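(* Let $\rho\in\mathbb N\cup\{\infty\}$, let $D$ be a Van Kampen diagram over $X_\rho$, and let $C\subset D$ be a simply connected cluster which is not complicated. Then $\|\partial C\|_\infty\le\mathrm{length}(\partial C)$ and $\|\partial C\|_1\le 2\,\mathrm{length}(\partial C)$.
   Context: Setting. $G=\langle S\mid\mathcal R\rangle$ is a finite presentation with $S$ finite symmetric and relators of length 2 or 3. $H_1,\dots,H_n\le G$, and $S_i\subset S$ is a finite symmetric generating set of $H_i$. Truncated relative presentation. For $\rho\in\mathbb N\cup\{\infty\}$, $\tilde H_i=\langle\tilde S_i\mid$ words of length $\le\rho$ over $S_i$ trivial in $H_i\rangle$, with $\tilde S_i$ a copy of $S_i$ and natural epimorphism $p_i:\tilde H_i\to H_i$. Put $\hat S=S\sqcup\tilde H_1\sqcup\dots\sqcup\tilde H_n$, each element of $\tilde H_i$ being a letter. $X_\rho$ is the presentation of $G$ with generators $\hat S$ and relators: - $\mathcal R'$, consisting of $\mathcal R$ together with the words $\tilde s^{-1}p_i(\tilde s)$ for $\tilde s\in\tilde S_i$; - for each $i$, all words of at most 3 letters of $\tilde H_i$ with trivial product in $\tilde H_i$. Complexity. $\|s\|=1$ for $s\in S$. For $a\in\tilde H_i$, $\|a\|$ is the word length with respect to $\tilde S_i$. For paths, $\|\cdot\|_1$ and $\|\cdot\|_\infty$ are the sum and the maximum of the edge-label complexities, and $\mathrm{length}$ is the number of edges. Clusters. 2-cells have type $\mathcal R'$ or $\tilde H_i$ according to their relator. Cells of the same type $\tilde H_i$ sharing an edge are cluster-adjacent.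 A cluster is the closure of a class of the transitive closure of this relation. $\partial C$ is the union of the edges of $C$ lying in exactly one 2-cell of $C$. Complicated. A cluster $C$ is complicated if $\partial C\cap\partial D$ contains at least two edges. *)

(* Defs.v *)
From Stdlib Require Import Relations ClassicalEpsilon.
From mathcomp Require Import all_boot.
Set Implicit Arguments. Unset Strict Implicit. Unset Printing Implicit Defensive.

(* Words in the free group on an alphabet A: sequences of signed letters      *)
(* (a, true) = a, (a, false) = a^{-1}.                                        *)
Definition inv_word {A : Type} (w : seq (A * bool)) : seq (A * bool) :=
  rev (map (fun x => (x.1, ~~ x.2)) w).

(* The congruence on words defining the group < alph | rel > : free          *)
(* cancellation of letters of the alphabet [alph] and insertion/deletion of   *)
(* relators (i.e. equality modulo the normal closure of the relators).       *)
Inductive wequiv {A : Type} (alph : A -> Prop) (rel : seq (A * bool) -> Prop) :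
    seq (A * bool) -> seq (A * bool) -> Prop :=
| weq_refl w : wequiv alph rel w w
| weq_sym u v : wequiv alph rel u v -> wequiv alph rel v u
| weq_trans u v w : wequiv alph rel u v -> wequiv alph rel v w -> wequiv alph rel u w
| weq_free u v a b : alph a ->
    wequiv alph rel (u ++ [:: (a, b); (a, ~~ b)] ++ v) (u ++ v)
| weq_rel u r v : rel r -> wequiv alph rel (u ++ r ++ v) (u ++ v).

Definition pb (P : Prop) : bool :=
  if excluded_middle_informative P then true else false.
Lemma pbP (P : Prop) : P -> pb P.
Proof. by rewrite /pb; case: excluded_middle_informative. Qed.

Section Presentation.

(* G = < S | R >, S finite (symmetric), R a finite list of relators over S;  *)
(* H_i = subgroup generated by S_i (i < n);  rho : None = infinity.          *)
Variables (S : finType) (R : seq (seq S)) (n : nat) (Si : 'I_n -> {set S})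
          (rho : option nat).

Definition pos_word (w : seq S) : seq (S * bool) := map (fun s => (s, true)) w.

Definition relG (r : seq (S * bool)) : Prop :=
  exists r0, r0 \in R /\ r = pos_word r0.

Definition trivG (w : seq (S * bool)) : Prop := wequiv (fun _ => True) relG w [::].

Definition le_rho (k : nat) : bool :=
  match rho with None => true | Some m => k <= m end.

(* relators of the truncated group tilde H_i : words of length <= rho over   *)
(* S_i which are trivial in H_i (equivalently in G, as H_i <= G)             *)
Definition relH (i : 'I_n) (r : seq (S * bool)) : Prop :=
  exists w : seq S, all (mem (Si i)) w /\ le_rho (size w) /\
    trivG (pos_word w) /\ r = pos_word w.

Definition hequiv (i : 'I_n) : seq (S * bool) -> seq (S * bool) -> Prop :=
  wequiv (fun s => s \in Si i) (relH i).

(* Letters of hat S = S |_| tilde H_1 |_| ... |_| tilde H_n.  An element of  *)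
(* tilde H_i is represented by a word over tilde S_i^{+-1} (letters of S_i);  *)
Inductive hletter : Type :=
| LS of S
| LH of 'I_n & seq (S * bool).

Definition valid_letter (l : hletter) : bool :=
  match l with LS _ => true | LH i w => all (fun x => x.1 \in Si i) w end.

Definition isLH (i : 'I_n) (l : hletter) : bool :=
  match l with LH j _ => j == i | LS _ => false end.

Definition leqv (x y : hletter * bool) : Prop :=
  x.2 = y.2 /\
  match x.1, y.1 with
  | LS s, LS t => s = t
  | LH i w, LH j w' => i = j /\ hequiv i w w'
  | _, _ => False
  end.

Fixpoint lseq_eqv (u v : seq (hletter * bool)) : Prop :=
  match u, v with
  | [::], [::] => True
  | x :: u', y :: v' => leqv x y /\ lseq_eqv u' v'
  | _, _ => False
  end.

Definition hword (x : hletter * bool) : seq (S * bool) :=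
  match x.1 with
  | LH _ w => if x.2 then w else inv_word w
  | LS _ => [::]
  end.

Definition relX (r : seq (hletter * bool)) : Prop :=
  (exists r0, r0 \in R /\ r = map (fun s => (LS s, true)) r0)
  (* tilde s^{-1} p_i(tilde s), for tilde s in tilde S_i *)
  \/ (exists (i : 'I_n) (s : S), s \in Si i /\
        r = [:: (LH i [:: (s, true)], false); (LS s, true)])
  \/ (exists i : 'I_n, size r <= 3 /\
        all (fun x => isLH i x.1 && valid_letter x.1) r /\
        hequiv i (flatten (map hword r)) [::]).

Definition hcplx_pred (i : 'I_n) (w : seq (S * bool)) (k : nat) : bool :=
  pb (exists w', size w' = k /\ hequiv i w w').

Lemma hcplx_ex i w : exists k, hcplx_pred i w k.
Proof. by exists (size w); apply: pbP; exists w; split => //; apply: weq_refl. Qed.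

Definition cplx (l : hletter) : nat :=
  match l with
  | LS _ => 1
  | LH i w => ex_minn (hcplx_ex i w)
  end.

(* Van Kampen diagrams as labelled planar combinatorial maps.                *)
(* D = darts (oriented edges), ed = reversal of a dart (fixed-point-free     *)
(* involution), fa = successor of a dart along its face (a permutation),     *)
(* vertices = orbits of fa \o ed (darts with the same tail), faces = orbits  *)
(* of fa; [outer] is a dart of the outer face; the other faces are the       *)
(* 2-cells.  lab d = label of the dart d (an oriented letter of hat S).      *)
Section Diagram.
Variables (D : finType) (ed fa : D -> D) (outer : D) (lab : D -> hletter * bool).

Definition sigma (x : D) : D := fa (ed x).

Definition glink (x y : D) : bool := (y == ed x) || (y == fa x).

Definition face_word (x : D) : seq (hletter * bool) := map lab (orbit fa x).

Definition inner (x : D) : bool := ~~ fconnect fa outer x.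

Definition cyc_relX (w : seq (hletter * bool)) : Prop :=
  exists r k, relX r /\
    (lseq_eqv w (rot k r) \/ lseq_eqv w (rot k (inv_word r))).

Definition is_VK : Prop :=
  [/\ (forall x, ed (ed x) = x), (forall x, ed x != x), injective fa &
      (forall x y, connect glink x y)] /\ [/\
      (* planar: Euler characteristic V - E + F = 2 *)
      (fcard sigma D + fcard fa D).*2 = #|D| + 4,
      (forall x, lab (ed x) = ((lab x).1, ~~ (lab x).2) /\ valid_letter (lab x).1)
    &
      (forall x, inner x -> cyc_relX (face_word x))].

Definition typeH (i : 'I_n) (x : D) : bool :=
  inner x && all (fun y => isLH i (lab y).1) (orbit fa x).

Definition cadj (i : 'I_n) (x y : D) : bool :=
  [&& typeH i x, typeH i y &
      fconnect fa x y || [exists z, fconnect fa x z && fconnect fa (ed z) y]].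

(* the cluster containing the cell of x0, as the set of darts of its cells *)
Definition cluster (i : 'I_n) (x0 : D) : {set D} := [set y | connect (cadj i) x0 y].

Section Cluster.
Variable C : {set D}.

(* edges of (the closure of) C *)
Definition inCl (x : D) : bool := (x \in C) || (ed x \in C).

(* boundary of C: edges lying in exactly one 2-cell of C (counted by sides); *)
(* each such edge is represented by its dart on the C side                   *)
Definition bdC : {set D} := [set x in C | ed x \notin C].

Definition bdC_bdD : {set D} := [set x in bdC | fconnect fa outer (ed x)].

Definition complicated : bool := 1 < #|bdC_bdD|.

(* combinatorial simple connectivity of the closure of C *)
Definition consec (x y : D) : bool := fconnect sigma (ed x) y.

Definition loopC (p : seq D) : bool := all inCl p && cycle consec p.

Definition hstep (p q : seq D) : Prop :=
  loopC p /\ loopC q /\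
  (q = rot 1 p \/
   exists u v, q = u ++ v /\
     ((exists x, inCl x /\ p = u ++ [:: x; ed x] ++ v) \/
      (exists x, x \in C /\ p = u ++ orbit fa x ++ v))).

Definition simply_connected : Prop :=
  (forall x y, inCl x -> inCl y ->
     connect (fun a b => [&& inCl a, inCl b & consec a b || (b == ed a)]) x y) /\
  (forall p, loopC p -> clos_refl_sym_trans _ hstep p [::]).

Definition norm1_bd : nat := \sum_(x in bdC) cplx (lab x).1.
Definition norminf_bd : nat := \max_(x in bdC) cplx (lab x).1.
Definition length_bd : nat := #|bdC|.

End Cluster.
End Diagram.
End Presentation.

(* Main.v *)
From HB Require Import structures.
Require Import Defs.
From mathcomp Require Import all_boot.
From Stdlib Require Import Relations.
Set Implicit Arguments. Unset Strict Implicit. Unset Printing Implicit Defensive.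

Section Enc.
Variables (S : finType) (n : nat).
Definition hl_enc (l : hletter S n) : S + ('I_n * seq (S * bool)) :=
  match l with LS s => inl s | LH j w => inr (j, w) end.
Definition hl_dec (e : S + ('I_n * seq (S * bool))) : hletter S n :=
  match e with inl s => LS _ s | inr (j, w) => LH j w end.
Lemma hl_encK : cancel hl_enc hl_dec. Proof. by case. Qed.
End Enc.
HB.instance Definition _ (S : finType) (n : nat) :=
  Equality.copy (hletter S n) (can_type (@hl_encK S n)).

Section Words.
Variables (A : eqType) (alph : A -> Prop) (rel : seq (A * bool) -> Prop).
Local Notation weq := (wequiv alph rel).

Lemma weq_ctx u v m m' : weq m m' -> weq (u ++ m ++ v) (u ++ m' ++ v).
Proof.
elim=> [w|a b _ IH|a b c _ IH1 _ IH2|u0 v0 a b Ha|u0 r v0 Hr].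
- exact: weq_refl.
- exact: weq_sym.
- exact: weq_trans IH1 IH2.
- have -> : u ++ (u0 ++ [:: (a, b); (a, ~~ b)] ++ v0) ++ v =
            (u ++ u0) ++ [:: (a, b); (a, ~~ b)] ++ (v0 ++ v) by rewrite !catA.
  have -> : u ++ (u0 ++ v0) ++ v = (u ++ u0) ++ (v0 ++ v) by rewrite !catA.
  exact: weq_free.
- have -> : u ++ (u0 ++ r ++ v0) ++ v = (u ++ u0) ++ r ++ (v0 ++ v) by rewrite !catA.
  have -> : u ++ (u0 ++ v0) ++ v = (u ++ u0) ++ (v0 ++ v) by rewrite !catA.
  exact: weq_rel.
Qed.

Lemma weq_cat u u' v v' : weq u u' -> weq v v' -> weq (u ++ v) (u' ++ v').
Proof.
move=> H1 H2; apply: (weq_trans (v := u' ++ v)).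
  by have := weq_ctx [::] v H1; rewrite /= .
by have := weq_ctx u' [::] H2; rewrite !cats0.
Qed.

Lemma inv_cat (u v : seq (A * bool)) : inv_word (u ++ v) = inv_word v ++ inv_word u.
Proof. by rewrite /inv_word map_cat rev_cat. Qed.

Lemma inv_invK (w : seq (A * bool)) : inv_word (inv_word w) = w.
Proof.
rewrite /inv_word map_rev revK -map_comp /=.
by elim: w => //= [[a b] w ->] /=; rewrite negbK.
Qed.

Lemma inv_cons x (w : seq (A * bool)) : inv_word (x :: w) = inv_word w ++ [:: (x.1, ~~ x.2)].
Proof. by rewrite -cat1s inv_cat. Qed.

Lemma size_inv (w : seq (A * bool)) : size (inv_word w) = size w.
Proof. by rewrite /inv_word size_rev size_map. Qed.

Definition goodw (w : seq (A * bool)) := forall x, x \in w -> alph x.1.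

Lemma goodw_cat u v : goodw (u ++ v) <-> goodw u /\ goodw v.
Proof.
split; first by move=> H; split=> x Hx; apply: H; rewrite mem_cat Hx ?orbT.
by case=> H1 H2 x; rewrite mem_cat => /orP [] ?; [apply: H1|apply: H2].
Qed.

Lemma goodw_inv w : goodw w -> goodw (inv_word w).
Proof.
move=> H x; rewrite /inv_word mem_rev => /mapP [y Hy ->] /=; exact: H.
Qed.

Lemma weq_cancel w : goodw w -> weq (w ++ inv_word w) [::].
Proof.
elim: w => [|x w IH] Hg /=; first exact: weq_refl.
rewrite inv_cons.
have H1 : goodw w by move=> y Hy; apply: Hg; rewrite inE Hy orbT.
apply: (weq_trans (v := [:: x] ++ [::] ++ [:: (x.1, ~~ x.2)])).
  have := weq_ctx [:: x] [:: (x.1, ~~ x.2)] (IH H1).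
  by rewrite /= -catA.
case: x Hg => a b Hg /=.
have := @weq_free _ alph rel [::] [::] a b (Hg (a, b) (mem_head _ _)).
by rewrite /=.
Qed.

Lemma weq_cancel' w : goodw w -> weq (inv_word w ++ w) [::].
Proof.
move=> H; have := weq_cancel (goodw_inv H); by rewrite inv_invK.
Qed.

Hypothesis rel_good : forall r, rel r -> goodw r.

Lemma weq_inv u v : weq u v -> weq (inv_word u) (inv_word v).
Proof.
elim=> [w|a b _ IH|a b c _ IH1 _ IH2|u0 v0 a b Ha|u0 r v0 Hr].
- exact: weq_refl.
- exact: weq_sym.
- exact: weq_trans IH1 IH2.
- rewrite !inv_cat -catA.
  have -> : inv_word [:: (a, b); (a, ~~ b)] = [:: (a, b); (a, ~~ b)]
    by rewrite /inv_word /= negbK.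
  exact: weq_free.
- rewrite !inv_cat -catA.
  have Hr' : weq (inv_word r) [::].
    apply: (weq_trans (v := inv_word r ++ r)).
      apply: weq_sym; have := @weq_rel _ alph rel (inv_word r) r [::] Hr.
      by rewrite !cats0.
    exact: weq_cancel' (rel_good Hr).
  by have := weq_ctx (inv_word v0) (inv_word u0) Hr'.
Qed.

Lemma weq_conj u v : goodw v -> weq (u ++ v) [::] -> weq (v ++ u) [::].
Proof.
move=> Hv H.
apply: (weq_trans (v := (v ++ u) ++ (v ++ inv_word v) ++ [::])).
  have := weq_ctx (v ++ u) [::] (weq_sym (weq_cancel Hv)).
  by rewrite !cats0.
have -> : (v ++ u) ++ (v ++ inv_word v) ++ [::] = v ++ (u ++ v) ++ inv_word v
  by rewrite cats0 !catA.
apply: (weq_trans (v := v ++ [::] ++ inv_word v)); first exact: weq_ctx.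
exact: weq_cancel Hv.
Qed.

Lemma weq_triv_iff u v : weq u v -> (weq u [::] <-> weq v [::]).
Proof.
move=> H; split=> H'; [exact: weq_trans (weq_sym H) H'|exact: weq_trans H H'].
Qed.

End Words.

Lemma iter_inj (T : Type) (f : T -> T) k : injective f -> injective (iter k f).
Proof. by move=> Hf; elim: k => [|k IH] x y //= /Hf /IH. Qed.

Lemma fr_unique (T : Type) (s : T -> T) (Hs : injective s) (P : pred T) y y' k k' :
  P y -> P y' -> 0 < k -> 0 < k' -> iter k s y = iter k' s y' ->
  (forall j, 0 < j < k -> ~~ P (iter j s y)) ->
  (forall j, 0 < j < k' -> ~~ P (iter j s y')) -> y = y'.
Proof.
move=> Py Py' Hk Hk' E H1 H2.
wlog Hkk : k k' y y' Py Py' Hk Hk' E H1 H2 / k <= k'.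
  move=> W; case/orP: (leq_total k k') => Hkk; first exact: W Hkk.
  by apply/esym; apply: (W k' k y' y).
have E2 : iter k' s y' = iter k s (iter (k' - k) s y') by rewrite -iterD subnKC.
rewrite E2 in E; have {E} E := iter_inj Hs E.
case Ed: (k' - k) => [|d]; first by rewrite Ed in E.
have : 0 < k' - k < k' by rewrite ltn_subrL Hk Hk' Ed.
by move/H2; rewrite -E Py.
Qed.

Section Main.
Variables (S : finType) (R : seq (seq S)) (n : nat) (Si : 'I_n -> {set S})
  (rho : option nat).
Variables (D : finType) (ed fa : D -> D) (outer : D) (lab : D -> hletter S n * bool).
Hypotheses (edK : forall x, ed (ed x) = x) (fa_inj : injective fa)
  (labE : forall x, lab (ed x) = ((lab x).1, ~~ (lab x).2))
  (labV : forall x, valid_letter Si (lab x).1)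
  (faces : forall x, inner fa outer x -> cyc_relX R Si rho (face_word fa lab x)).
Variables (i : 'I_n) (x0 : D).
Hypothesis Hx0 : typeH fa outer lab i x0.

Local Notation C := (cluster ed fa outer lab i x0).
Local Notation heq := (hequiv R Si rho i).
Local Notation good := (goodw (fun s : S => s \in Si i)).
Local Notation typeH := (typeH fa outer lab i).

Lemma relH_good r : relH R Si rho i r -> good r.
Proof.
case=> w [Hw [_ [_ ->]]] x /mapP [s Hs ->] /=.
by move/allP: Hw => /(_ s Hs).
Qed.

Lemma heq_inv u v : heq u v -> heq (inv_word u) (inv_word v).
Proof. exact: (@weq_inv _ (fun s => s \in Si i) (relH R Si rho i) relH_good u v). Qed.

Lemma typeH_conn x y : fconnect fa x y -> typeH x -> typeH y.
Proof.
rewrite /Defs.typeH => Hxy /andP [Hin Hall]; apply/andP; split.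
  rewrite /inner; apply: contra Hin => Hy.
  by apply: connect_trans Hy _; rewrite (fconnect_sym fa_inj).
apply/allP => z; rewrite -fconnect_orbit => Hz; apply: (allP Hall).
by rewrite -fconnect_orbit; apply: connect_trans Hxy Hz.
Qed.

Lemma conn_typeH x y : typeH x -> connect (cadj ed fa outer lab i) x y -> typeH y.
Proof.
move=> Hx /connectP [p]; elim: p x Hx => [|z p IH] x Hx /=; first by move=> _ ->.
by case/andP => /and3P [_ Hz _] Hp Hl; apply: IH Hz Hp Hl.
Qed.

Lemma inC_typeH y : y \in C -> typeH y.
Proof. by rewrite /cluster inE; apply: conn_typeH. Qed.

Lemma C_conn x y : x \in C -> fconnect fa x y -> y \in C.
Proof.
move=> Hx Hxy; have Hx' := Hx; rewrite /cluster inE in Hx'; rewrite /cluster inE.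
apply: connect_trans Hx' (connect1 _).
by rewrite /cadj inC_typeH // (typeH_conn Hxy (inC_typeH Hx)) Hxy.
Qed.

Lemma C_fa x : x \in C -> fa x \in C.
Proof. by move=> Hx; apply: C_conn Hx (fconnect1 _ _). Qed.

Lemma C_ed x : x \in C -> typeH (ed x) -> ed x \in C.
Proof.
move=> Hx Hy; have Hx' := Hx; rewrite /cluster inE in Hx'; rewrite /cluster inE.
apply: connect_trans Hx' (connect1 _).
rewrite /cadj inC_typeH // Hy /=; apply/orP; right.
by apply/existsP; exists x; rewrite !connect0.
Qed.

Lemma typeH_isLH x : typeH x -> isLH i (lab x).1.
Proof.
by case/andP => _ /allP; apply; rewrite -fconnect_orbit connect0.
Qed.

Lemma inCl_isLH x : inCl ed C x -> isLH i (lab x).1.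
Proof.
case/orP => H; first exact: typeH_isLH (inC_typeH H).
by have := typeH_isLH (inC_typeH H); rewrite labE.
Qed.

Lemma good_letter x : isLH i x.1 -> valid_letter Si x.1 -> good (hword x).
Proof.
case: x => [[s|j w] b] //= /eqP -> Hv.
have Hg : good w by move=> y Hy; apply: (allP Hv).
by rewrite /hword /=; case: b => //; apply: goodw_inv.
Qed.

Lemma good_hword x : inCl ed C x -> good (hword (lab x)).
Proof. by move=> H; apply: good_letter (inCl_isLH H) (labV x). Qed.

Lemma hword_flip (x : hletter S n * bool) : hword (x.1, ~~ x.2) = inv_word (hword x).
Proof. by case: x => [[s|j w] [|]] //=; rewrite /hword /= inv_invK. Qed.

Lemma hword_ed x : hword (lab (ed x)) = inv_word (hword (lab x)).
Proof. by rewrite labE hword_flip. Qed.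

Definition Phi (l : seq (hletter S n * bool)) := flatten (map (@hword S n) l).

Lemma Phi_cat u v : Phi (u ++ v) = Phi u ++ Phi v.
Proof. by rewrite /Phi map_cat flatten_cat. Qed.

Lemma Phi_cons x u : Phi (x :: u) = hword x ++ Phi u.
Proof. by []. Qed.

Lemma Phi_inv r : Phi (inv_word r) = inv_word (Phi r).
Proof.
elim: r => //= x r IH.
by rewrite inv_cons Phi_cat IH !Phi_cons /Phi /= cats0 hword_flip inv_cat.
Qed.

Lemma Phi_good l : all (fun x => isLH i x.1 && valid_letter Si x.1) l -> good (Phi l).
Proof.
elim: l => [|x l IH] /=; first by move=> ?.
case/andP => /andP [H1 H2] /IH H; rewrite Phi_cons; apply/goodw_cat; split=> //.
exact: good_letter.
Qed.


Definition lmatch (l l' : hletter S n) : Prop :=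
  match l, l' with
  | LS s, LS t => s = t
  | LH j w, LH j' w' => j = j' /\ hequiv R Si rho j w w'
  | _, _ => False
  end.

Lemma leqv_lmatch x y : leqv R Si rho x y -> lmatch x.1 y.1.
Proof. by case: x y => [[?|? ?] ?] [[?|? ?] ?] [_ H]. Qed.

Lemma lseq_mem1 u v x : lseq_eqv R Si rho u v -> x \in u ->
  exists2 y, y \in v & leqv R Si rho x y.
Proof.
elim: u v => [|a u IH] [|b v] //= [Hab Huv]; rewrite inE => /orP [/eqP -> | Hx].
  by exists b; rewrite ?mem_head.
by case: (IH v Huv Hx) => y Hy H; exists y; rewrite // inE Hy orbT.
Qed.

Lemma lseq_mem2 u v y : lseq_eqv R Si rho u v -> y \in v ->
  exists2 x, x \in u & leqv R Si rho x y.
Proof.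
elim: u v => [|a u IH] [|b v] //= [Hab Huv]; rewrite inE => /orP [/eqP -> | Hx].
  by exists a; rewrite ?mem_head.
by case: (IH v Huv Hx) => y' Hy H; exists y'; rewrite // inE Hy orbT.
Qed.

Lemma mem_invw (r : seq (hletter S n * bool)) y : y \in inv_word r ->
  exists2 z, z \in r & y.1 = z.1.
Proof. by rewrite /inv_word mem_rev => /mapP [z Hz ->]; exists z. Qed.

Lemma mem_invw2 (r : seq (hletter S n * bool)) z : z \in r ->
  exists2 y, y \in inv_word r & y.1 = z.1.
Proof.
by move=> Hz; exists (z.1, ~~ z.2); rewrite // /inv_word mem_rev; apply: map_f.
Qed.

Lemma face_match1 u r k (fl : bool) x :
  lseq_eqv R Si rho u (rot k (if fl then inv_word r else r)) -> x \in u ->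
  exists2 y, y \in r & lmatch x.1 y.1.
Proof.
move=> H Hx; case: (lseq_mem1 H Hx) => y; rewrite mem_rot => Hy /leqv_lmatch Hm.
clear H; case: fl Hy => Hy; last by exists y.
by case: (mem_invw Hy) => z Hz E; exists z; rewrite // -E.
Qed.

Lemma face_match2 u r k (fl : bool) y :
  lseq_eqv R Si rho u (rot k (if fl then inv_word r else r)) -> y \in r ->
  exists2 x, x \in u & lmatch x.1 y.1.
Proof.
move=> H Hy.
have [y' Hy' E] : exists2 y', y' \in (if fl then inv_word r else r) & y'.1 = y.1.
  clear H; case: fl; last by exists y.
  by case: (mem_invw2 Hy) => y' Hy' E; exists y'.
rewrite -(mem_rot k) in Hy'.
case: (lseq_mem2 H Hy') => x Hx /leqv_lmatch Hm; exists x => //; by rewrite -E.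
Qed.

Lemma lmatch_LH l j w : lmatch l (LH j w) -> isLH j l.
Proof. by case: l => [s []|j' w' [-> _]] /=. Qed.

Lemma LH_lmatch j w l' : lmatch (LH j w) l' ->
  exists w', l' = LH j w' /\ hequiv R Si rho j w w'.
Proof. by case: l' => // j' w' [<- H]; exists w'. Qed.

Lemma lmatch_LS l s : lmatch l (LS n s) -> ~~ isLH i l.
Proof. by case: l. Qed.

Lemma leqv_hword x y : leqv R Si rho x y -> isLH i x.1 -> heq (hword x) (hword y).
Proof.
case: x => [[s|j w] b]; case: y => [[s'|j' w'] b'] //=; first by case.
case=> /= Eb [Ejj Hw] /eqP Ej.
subst j j' b; rewrite /hword /=; case: b' => //; exact: heq_inv.
Qed.

Lemma lseq_Phi u v : lseq_eqv R Si rho u v -> all (fun l => isLH i l.1) u ->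
  heq (Phi u) (Phi v).
Proof.
elim: u v => [|a u IH] [|b v] //=; first by move=> _ _; apply: weq_refl.
case=> Hab Huv /andP [Ha Hu]; rewrite !Phi_cons.
exact: weq_cat (leqv_hword Hab Ha) (IH v Huv Hu).
Qed.

Lemma lab_in_face x : lab x \in face_word fa lab x.
Proof. by rewrite /face_word; apply: map_f; rewrite -fconnect_orbit connect0. Qed.

Lemma cyc_fl x : inner fa outer x -> exists r k fl, relX R Si rho r /\
  lseq_eqv R Si rho (face_word fa lab x) (rot k (if fl then inv_word r else r)).
Proof.
move/faces => [r [k [Hr [H|H]]]]; exists r, k; [exists false|exists true]; by split.
Qed.

Lemma bd_class x : x \in bdC ed C -> ~~ fconnect fa outer (ed x) ->
  exists w s, (lab x).1 = LH i w /\ s \in Si i /\ heq w [:: (s, true)].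
Proof.
rewrite /bdC inE => /andP [HxC HedC] Hout.
have := typeH_isLH (inC_typeH HxC).
case Elx: (lab x) => [[s0|j w] b] //= /eqP Ej; subst j.
have Hin : inner fa outer (ed x) by [].
case: (cyc_fl Hin) => r [k [fl [Hr Hl]]].
case: (face_match1 Hl (lab_in_face (ed x))) => y Hy; rewrite labE Elx /= => Hm.
case: (LH_lmatch Hm) => w' [Ey Hw].
case: Hr => [[r0 [_ Er]] | [[j [s [Hs Er]]] | [j [_ [Hall _]]]]].
- by subst r; case/mapP: Hy => s1 _ Ey'; rewrite Ey' in Ey.
- subst r; rewrite !inE in Hy; case/orP: Hy => /eqP Ey'; rewrite Ey' /= in Ey => //.
  by case: Ey => Eji Ew; subst; exists w, s.
- have := allP Hall y Hy; rewrite Ey /= => /andP [/eqP Eij _]; subst j.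
  have HT : typeH (ed x).
    apply/andP; split=> //.
    have : all (fun l => isLH i l.1) (face_word fa lab (ed x)).
      apply/allP => z Hz; case: (face_match1 Hl Hz) => y' Hy' Hm'.
      move: (allP Hall y' Hy') Hm'; case: (y'.1) => // j' w'' /andP [/eqP -> _].
      exact: lmatch_LH.
    by rewrite /face_word all_map.
  by rewrite (C_ed HxC HT) in HedC.
Qed.

Lemma face_triv x : x \in C -> heq (Phi (face_word fa lab x)) [::].
Proof.
move=> HxC; have HT := inC_typeH HxC; case/andP: (HT) => Hin Hall.
have HallF : all (fun l => isLH i l.1) (face_word fa lab x) by rewrite /face_word all_map.
case: (cyc_fl Hin) => r [k [fl [Hr Hl]]].
have := typeH_isLH HT.
case Elx: (lab x) => [[s0|j w] b] //= /eqP Ej; subst j.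
case: (face_match1 Hl (lab_in_face x)) => y Hy; rewrite Elx /= => Hm.
case: (LH_lmatch Hm) => w' [Ey Hw].
case: Hr => [[r0 [_ Er]] | [[j [s [Hs Er]]] | [j [_ [Hall3 Htr]]]]].
- by subst r; case/mapP: Hy => s1 _ Ey'; rewrite Ey' in Ey.
- have HS : (LS n s, true) \in r by rewrite Er !inE eqxx orbT.
  case: (face_match2 Hl HS) => z Hz /lmatch_LS.
  by rewrite (allP HallF z Hz).
- have := allP Hall3 y Hy; rewrite Ey /= => /andP [/eqP Eij _]; subst j.
  have Hall' : all (fun x => isLH i x.1 && valid_letter Si x.1)
      (if fl then inv_word r else r).
    clear Hl; case: fl => //; apply/allP => z /mem_invw [z' Hz' ->].
    exact: (allP Hall3).
  have Htr' : heq (Phi (if fl then inv_word r else r)) [::].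
    clear Hl Hall'; case: fl => //; rewrite Phi_inv.
    by have := heq_inv Htr.
  apply: weq_trans (lseq_Phi Hl HallF) _.
  have Hg := Phi_good Hall'.
  rewrite -(cat_take_drop k (if fl then inv_word r else r)) Phi_cat in Hg Htr'.
  case/goodw_cat: Hg => _ Hg1.
  by rewrite /rot Phi_cat; apply: weq_conj Hg1 Htr'.
Qed.

Definition Phi' (p : seq D) := Phi (map lab p).

Lemma Phi'_cat u v : Phi' (u ++ v) = Phi' u ++ Phi' v.
Proof. by rewrite /Phi' map_cat Phi_cat. Qed.

Lemma Phi'_cons x u : Phi' (x :: u) = hword (lab x) ++ Phi' u.
Proof. by []. Qed.

Lemma Phi'_1 x : Phi' [:: x] = hword (lab x).
Proof. by rewrite /Phi' /Phi /= cats0. Qed.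

Lemma good_Phi' p : all (inCl ed C) p -> good (Phi' p).
Proof.
elim: p => [|a p IH] /=; first by move=> _ ?.
case/andP => Ha Hp; rewrite Phi'_cons; apply/goodw_cat; split.
  exact: good_hword.
exact: IH.
Qed.

Lemma hstep_triv p q : hstep ed fa C p q ->
  (heq (Phi' p) [::] <-> heq (Phi' q) [::]).
Proof.
case=> /andP [Hp _] [/andP [Hq _] [-> | [u [v [-> [[x [Hx ->]] | [x [Hx ->]]]]]]]].
- case: p Hp => [|a p] Hp //=.
  case/andP: Hp => Ha Hp.
  rewrite rot1_cons -cats1 Phi'_cat Phi'_cons Phi'_1.
  have Hga := good_hword Ha; have Hgp := good_Phi' Hp.
  split=> H; first exact: weq_conj Hgp H.
  exact: weq_conj Hga H.
- have E : Phi' (u ++ [:: x; ed x] ++ v) =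
           Phi' u ++ (hword (lab x) ++ hword (lab (ed x))) ++ Phi' v.
    by rewrite !Phi'_cat !Phi'_cons /Phi' /Phi /= -!catA.
  rewrite E; apply: weq_triv_iff.
  rewrite Phi'_cat -[Phi' u ++ Phi' v]/(Phi' u ++ [::] ++ Phi' v).
  apply: weq_ctx; rewrite hword_ed; exact: weq_cancel (good_hword Hx).
- rewrite !Phi'_cat; apply: weq_triv_iff.
  rewrite -[Phi' u ++ Phi' v]/(Phi' u ++ [::] ++ Phi' v).
  apply: weq_ctx; exact: face_triv.
Qed.

Lemma Triv_loop p : simply_connected ed fa C -> loopC ed fa C p -> heq (Phi' p) [::].
Proof.
case=> _ Hsc Hp; have H := Hsc p Hp.
suff: forall a b, clos_refl_sym_trans _ (hstep ed fa C) a b ->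
  (heq (Phi' a) [::] <-> heq (Phi' b) [::]).
  by move=> /(_ _ _ H) ->; apply: weq_refl.
move=> a b; elim => {a b H} [a b /hstep_triv //|a|a b _ IH|a b c _ IH1 _ IH2]; tauto.
Qed.

Local Notation sg := (sigma ed fa).
Local Notation B := (bdC ed C).

Lemma sg_inj : injective sg.
Proof. by move=> a b; rewrite /sigma => /fa_inj /(can_inj edK). Qed.

Definition Aset : pred D := fun y => (y \notin C) || (ed y \notin C).
Definition frP (y : D) : pred nat :=
  fun k => Aset (iter k.+1 sg y) || (iter k.+1 sg y == y).

Lemma fr_ex y : exists k, frP y k.
Proof.
exists (fingraph.order sg y).-1; rewrite /frP prednK ?order_gt0 //.
by rewrite (iter_order sg_inj) eqxx orbT.
Qed.

Definition frk y := ex_minn (fr_ex y).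
Definition nextD x := iter (frk (ed x)).+1 sg (ed x).

Lemma frk_props y : Aset y ->
  Aset (iter (frk y).+1 sg y) /\ forall j, j < frk y -> ~~ Aset (iter j.+1 sg y).
Proof.
move=> Hy; rewrite /frk; case: ex_minnP => m Hm Hmin; split.
  by case/orP: Hm => // /eqP ->.
move=> j Hj; apply/negP => Hj'.
by have := Hmin j; rewrite /frP Hj' /= => /(_ isT); rewrite leqNgt Hj.
Qed.

Lemma Aset_ed x : x \in B -> Aset (ed x).
Proof. by rewrite /bdC inE => /andP [_ H]; rewrite /Aset H. Qed.

Lemma nextD_C x : x \in B -> forall j, j <= frk (ed x) -> iter j.+1 sg (ed x) \in C.
Proof.
move=> Hx; have HA := Aset_ed Hx; move: Hx; rewrite /bdC inE => /andP [HxC HedC].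
elim=> [|j IH] Hj; first by rewrite /= /sigma edK; apply: C_fa.
have Hj' : j < frk (ed x) := Hj.
have := (frk_props HA).2 j Hj'; rewrite /Aset negb_or !negbK => /andP [_ H2].
by rewrite iterS /sigma; apply: C_fa H2.
Qed.

Lemma nextD_bd x : x \in B -> nextD x \in B.
Proof.
move=> Hx; have HC := nextD_C Hx (leqnn _).
have HA := (frk_props (Aset_ed Hx)).1; rewrite /Aset HC /= in HA.
by rewrite /bdC inE /nextD HC HA.
Qed.

Lemma nextD_inj x x' : x \in B -> x' \in B -> nextD x = nextD x' -> x = x'.
Proof.
move=> Hx Hx' E; apply: (can_inj edK).
apply: (fr_unique sg_inj (Aset_ed Hx) (Aset_ed Hx') (ltn0Sn _) (ltn0Sn _) E).
  case=> // j /andP [_ Hj]; exact: (frk_props (Aset_ed Hx)).2.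
case=> // j /andP [_ Hj]; exact: (frk_props (Aset_ed Hx')).2.
Qed.

Definition N x := if x \in B then nextD x else x.

Lemma N_bd x : x \in B -> N x \in B.
Proof. by move=> Hx; rewrite /N Hx; apply: nextD_bd. Qed.

Lemma N_inj : injective N.
Proof.
move=> a b; rewrite /N; case: ifP => Ha; case: ifP => Hb.
- exact: nextD_inj.
- by move=> E; move: (nextD_bd Ha); rewrite E Hb.
- by move=> E; move: (nextD_bd Hb); rewrite -E Ha.
- by [].
Qed.

Lemma iterN_bd b j : b \in B -> iter j N b \in B.
Proof. by move=> Hb; elim: j => //= j IH; apply: N_bd. Qed.

Lemma orbitN_bd b z : b \in B -> z \in orbit N b -> z \in B.
Proof. by move=> Hb; rewrite /orbit => /trajectP [j _ ->]; apply: iterN_bd. Qed.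

Lemma loopN b : b \in B -> loopC ed fa C (orbit N b).
Proof.
move=> Hb; rewrite /loopC; apply/andP; split.
  apply/allP => z /(orbitN_bd Hb); rewrite /bdC inE /inCl => /andP [-> _] //.
apply: (sub_in_cycle (P := mem B)) (cycle_orbit N_inj b).
  move=> a c Ha Hc /eqP <-; rewrite /N Ha /consec /nextD; exact: fconnect_iter.
by apply/allP => z; apply: orbitN_bd.
Qed.

Lemma wit z : z \in B -> ~~ fconnect fa outer (ed z) ->
  exists W, size W <= 1 /\ good W /\ heq (hword (lab z)) W.
Proof.
move=> Hz Ho; case: (bd_class Hz Ho) => w [s [Elz [Hs Hw]]].
rewrite /hword Elz; case: (lab z).2.
  exists [:: (s, true)]; split=> //; split=> //.
  by move=> y; rewrite inE => /eqP ->.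
exists [:: (s, false)]; split=> //; split.
  by move=> y; rewrite inE => /eqP ->.
exact: (heq_inv Hw).
Qed.

Lemma cplx_le w W : heq w W -> cplx R Si rho (LH i w) <= size W.
Proof.
move=> H; rewrite /cplx; case: ex_minnP => m _ Hmin; apply: Hmin.
by apply: pbP; exists W; split.
Qed.

Lemma Phi'_wit l : (forall z, z \in l ->
    exists W, size W <= 1 /\ good W /\ heq (hword (lab z)) W) ->
  exists W, size W <= size l /\ good W /\ heq (Phi' l) W.
Proof.
elim: l => [|a l IH] H; first by exists [::]; split=> //; split=> //; apply: weq_refl.
case: (H a (mem_head _ _)) => Wa [Ha1 [Ha2 Ha3]].
case: IH => [z Hz|W [H1 [H2 H3]]]; first by apply: H; rewrite inE Hz orbT.
exists (Wa ++ W); split; first by rewrite size_cat /= -add1n leq_add.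
split; first by apply/goodw_cat.
by rewrite Phi'_cons; apply: weq_cat.
Qed.

Lemma b_bound b : simply_connected ed fa C -> b \in B ->
  (forall z, z \in B -> z != b -> ~~ fconnect fa outer (ed z)) ->
  cplx R Si rho (lab b).1 <= #|B|.
Proof.
move=> Hsc Hb Hoth.
have Ht := Triv_loop Hsc (loopN Hb).
have Hsz0 : #|orbit N b| <= #|B|.
  by apply: subset_leq_card; apply/subsetP => z; apply: orbitN_bd Hb.
rewrite (card_uniqP (orbit_uniq N b)) in Hsz0.
have Hu := orbit_uniq N b.
have [m Em] : exists m, orbit N b = b :: traject N (N b) m.
  by rewrite /orbit; case: (fingraph.order N b) (order_gt0 N b) => // m _; exists m.
rewrite Em in Ht Hu Hsz0.
move: Ht Hu Hsz0; set rest := traject N (N b) m => Ht /= /andP [Hbr _] Hsz0.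
have Hrest : forall z, z \in rest ->
    exists W, size W <= 1 /\ good W /\ heq (hword (lab z)) W.
  move=> z Hz; have HzB : z \in B by apply: (orbitN_bd Hb); rewrite Em inE Hz orbT.
  apply: wit => //; apply: Hoth => //; apply/eqP => E; subst z.
  by rewrite Hz in Hbr.
case: (Phi'_wit Hrest) => W [HsW [HgW HW]].
rewrite Phi'_cons in Ht.
have H1 : heq (hword (lab b) ++ W) [::].
  apply: weq_trans _ Ht; apply: weq_sym; apply: weq_cat HW.
  exact: weq_refl.
have H2 : heq (hword (lab b)) (inv_word W).
  apply: (weq_trans (v := hword (lab b) ++ (W ++ inv_word W))).
    have := weq_ctx (hword (lab b)) [::] (weq_sym (@weq_cancel _ _ (relH R Si rho i) W HgW)).
    by rewrite /= !cats0.
  rewrite catA; have := weq_ctx [::] (inv_word W) H1; by rewrite /=.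
have Hs : size W <= #|B| by apply: leq_trans HsW (ltnW Hsz0).
have HbC : b \in C by move: Hb; rewrite /bdC inE => /andP [].
have := typeH_isLH (inC_typeH HbC).
move: H2; rewrite /hword.
case Elb: (lab b) => [[s0|j w] bo] //= H2 /eqP Ej; subst j.
clear Elb; case: bo H2 => H2.
  by apply: leq_trans (cplx_le H2) _; rewrite size_inv.
have := heq_inv H2; rewrite !inv_invK => H3.
exact: leq_trans (cplx_le H3) Hs.
Qed.

Lemma final : simply_connected ed fa C -> ~~ complicated ed fa outer C ->
  norminf_bd R Si rho ed lab C <= length_bd ed C /\
  norm1_bd R Si rho ed lab C <= 2 * length_bd ed C.
Proof.
move=> Hsc Hnc.
have Hle1 : forall z, z \in B -> ~~ fconnect fa outer (ed z) ->
    cplx R Si rho (lab z).1 <= 1.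
  by move=> z Hz Ho; case: (bd_class Hz Ho) => w [s [-> [_ Hw]]]; apply: cplx_le Hw.
rewrite /norminf_bd /norm1_bd /length_bd.
case: (pickP (mem (bdC_bdD ed fa outer C))) => [b Hb | Hno].
- have Hb' : b \in bdC_bdD ed fa outer C := Hb.
  have HbB : b \in B by move: Hb'; rewrite /bdC_bdD inE => /andP [].
  have HbB2 : b \in B := HbB.
  have Hoth : forall z, z \in B -> z != b -> ~~ fconnect fa outer (ed z).
    move=> z Hz Hzb; apply/negP => Ho.
    have Hz2 : z \in bdC_bdD ed fa outer C by rewrite /bdC_bdD inE Hz Ho.
    have : #|[set b; z]| <= #|bdC_bdD ed fa outer C|.
      by apply: subset_leq_card; apply/subsetP => y; rewrite in_set2 => /orP [] /eqP ->.
    rewrite cards2 eq_sym Hzb => H2.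
    by move: Hnc; rewrite /complicated H2.
  have Hbb := b_bound Hsc HbB Hoth.
  have HB0 : 0 < #|B| by apply/card_gt0P; exists b.
  split.
    apply/bigmax_leqP => z Hz; case: (eqVneq z b) => [->|Hzb] //.
    exact: leq_trans (Hle1 z Hz (Hoth z Hz Hzb)) HB0.
  rewrite (bigD1 b) //= mul2n -addnn leq_add //.
  apply: (@leq_trans (\sum_(z in B | z != b) 1)).
    by apply: leq_sum => z /andP [Hz Hzb]; apply: Hle1 Hz (Hoth z Hz Hzb).
  rewrite sum1dep_card; apply: subset_leq_card; apply/subsetP => z.
  by rewrite inE => /andP [].
- have Hall : forall z, z \in B -> cplx R Si rho (lab z).1 <= 1.
    move=> z Hz; apply: (Hle1 z Hz); apply/negP => Ho.
    have Hz2 : z \in bdC_bdD ed fa outer C by rewrite /bdC_bdD inE Hz Ho.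
    by have := Hno z; rewrite /= Hz2.
  split.
    apply/bigmax_leqP => z Hz; apply: leq_trans (Hall z Hz) _.
    by apply/card_gt0P; exists z.
  apply: (@leq_trans (\sum_(z in B) 1)); first by apply: leq_sum.
  by rewrite sum1_card mul2n -addnn leq_addl.
Qed.

End Main.

Theorem lemma2p5 (S : finType) (R : seq (seq S)) (n : nat)
    (Si : 'I_n -> {set S}) (rho : option nat)
    (HR : forall r, r \in R -> (size r == 2) || (size r == 3))
    (HS : forall s : S, exists t : S, trivG R [:: (s, true); (t, true)])
    (HSi : forall (i : 'I_n) (s : S), s \in Si i ->
             exists2 t : S, t \in Si i & trivG R [:: (s, true); (t, true)])
    (D : finType) (ed fa : D -> D) (outer : D)
    (lab : D -> hletter S n * bool)
    (HD : is_VK R Si rho ed fa outer lab)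
    (i : 'I_n) (x0 : D) (Hx0 : typeH fa outer lab i x0) :
  let C := cluster ed fa outer lab i x0 in
  simply_connected ed fa C ->
  ~~ complicated ed fa outer C ->
  norminf_bd R Si rho ed lab C <= length_bd ed C /\
  norm1_bd R Si rho ed lab C <= 2 * length_bd ed C.
Proof.
move=> C Hsc Hnc.
case: HD => [[edK edN fa_inj conn] [euler labP faces]].
have labE : forall x, lab (ed x) = ((lab x).1, ~~ (lab x).2) by move=> x; case: (labP x).
have labV : forall x, valid_letter Si (lab x).1 by move=> x; case: (labP x).
exact: (final edK fa_inj labE labV faces Hx0 Hsc Hnc).
Qed.
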